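(* Let $R$ be a commutative ring and $d\in\mathbb{N}$. Then $H_a(\widetilde{S}_{-*}M(d))=0$ for every $a\ge1$; equivalently, for every $n\in\mathbb{N}$ and every $a\ge1$, the homology of the complex of $R$-modules $(\widetilde{S}_{-*}M(d))([n])$ at the term $(\widetilde{S}_{-a}M(d))([n])$ vanishes.
   Context: Let $R$ be a commutative ring. $\mathrm{FI}$ denotes the category of finite sets and injective maps; an $\mathrm{FI}$-module is a covariant functor from $\mathrm{FI}$ to $R$-modules. For $n\in\mathbb{N}$, $[n]=\{1,\dots,n\}$. For $d\in\mathbb{N}$, $M(d)$ is the $\mathrm{FI}$-module with $M(d)(X)=R\,\mathrm{Hom}_{\mathrm{FI}}([d],X)$ (free $R$-module on injections $[d]\to X$), with injections $X\to X'$ acting by post-composition. The complex $\widetilde{S}_{-*}V$: for a finite set $I$, $\det(I)=\bigwedge^{|I|}RI$ where $RI$ is free on $I$ ($\det(\emptyset)=R$). For an $\mathrm{FI}$-module $V$, finite set $X$, $T\subset X$, $i\in X\setminus T$, $v\in V(T)$, write $i(v)$ for the image of $v$ under the inclusion $T\to T\cup\{i\}$. Set $(\widetilde{S}_{-a}V)(X)=\bigoplus_{I\subset X,|I|=a}V(X\setminus I)\otimes_R\det(I)$, with differential $d(v\otimes i_1\wedge\cdots\wedge i_a)=\sum_{p=1}^a(-1)^p i_p(v)\otimes i_1\wedge\cdots\widehat{i_p}\cdots\wedge i_a$ for $v\in V(X\setminus I)$, $I=\{i_1,\dots,i_a\}$; an injection $\alpha:X\to X'$ acts by $v\otimes i_1\wedge\cdots\wedge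 i_a\mapsto\alpha(v)\otimes\alpha(i_1)\wedge\cdots\wedge\alpha(i_a)$. Thus $\cdots\to\widetilde{S}_{-1}V\to\widetilde{S}_0V\to0$ is a complex of $\mathrm{FI}$-modules, and $H_a(\widetilde{S}_{-*}V)$ denotes its homology at $\widetilde{S}_{-a}V$. *)

(* Defs.v *)
From HB Require Import structures.
From mathcomp Require Import all_boot all_order all_algebra.
Set Implicit Arguments. Unset Strict Implicit. Unset Printing Implicit Defensive.
Import Order.TTheory GRing.Theory Num.Theory.

(* Concrete model of the complex (S~_{-*} M(d))([n]) of R-modules.
   [n] is modelled by 'I_n (order-preserving relabelling 1..n -> 0..n-1).
   (S~_{-a} M(d))([n]) = (+)_{I subset [n], |I| = a} M(d)([n] \ I) (x) det(I)
   is a free R-module with basis the pairs (I, f) with |I| = a and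
   f : [d] -> [n] \ I injective; the basis vector is
   f (x) i_1 /\ ... /\ i_a  with  i_1 < ... < i_a  the elements of I.
   An element is represented by its coefficient function on pairs
   (I, f) in {set 'I_n} * {ffun 'I_d -> 'I_n}, vanishing off the basis. *)

Definition FIbasis (n d : nat) := ({set 'I_n} * {ffun 'I_d -> 'I_n})%type.

Definition valid_pair (n d a : nat) (p : FIbasis n d) : bool :=
  [&& #|p.1| == a, injectiveb p.2 & [disjoint codom p.2 & p.1]].

Definition is_chain (R : comPzRingType) (n d a : nat)
    (c : {ffun FIbasis n d -> R}) : Prop :=
  forall p, ~~ valid_pair a p -> c p = 0%R.

(* The differential, written on coefficients:
   d(f (x) i_1/\.../\i_a) = sum_p (-1)^p f (x) i_1/\..^i_p../\i_a, so the
   coefficient of f (x) J in d c is  sum_{i notin J} (-1)^{pos(i, J+i)} c(J+i, f)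
   where pos(i, J+i) = 1 + #{j in J | j < i} is the (1-based) position of i. *)
Definition bd (R : comPzRingType) (n d : nat)
    (c : {ffun FIbasis n d -> R}) : {ffun FIbasis n d -> R} :=
  [ffun p : FIbasis n d =>
     (\sum_(i : 'I_n | i \notin p.1)
        (-1) ^+ (#|[set j in p.1 | (j < i)%N]|.+1) * c (i |: p.1, p.2))%R].

(* Main.v *)
Require Import Defs.
From HB Require Import structures.
From mathcomp Require Import all_boot all_order all_algebra.
From mathcomp Require Import zify.
Import Order.TTheory GRing.Theory Num.Theory.
Set Implicit Arguments. Unset Strict Implicit.

Section S.
Variables (R : comPzRingType) (n d : nat).
Local Open Scope ring_scope.

Definition e (i : 'I_n) (J : {set 'I_n}) : R :=
  (-1) ^+ (#|[set j in J | (j < i)%N]|.+1).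

Lemma bdE (c : {ffun FIbasis n d -> R}) p :
  bd c p = \sum_(i : 'I_n | i \notin p.1) e i p.1 * c (i |: p.1, p.2).
Proof. by rewrite ffunE. Qed.

Lemma ee i J : e i J * e i J = 1.
Proof. by rewrite -expr2 /e sqrr_sign. Qed.

Lemma card_sep (x : 'I_n) (A : {set 'I_n}) (P : pred 'I_n) : x \notin A ->
  #|[set j in x |: A | P j]| = ((P x : nat) + #|[set j in A | P j]|)%N.
Proof.
move=> xA; case Px: (P x).
  have -> : [set j in x |: A | P j] = x |: [set j in A | P j].
    by apply/setP=> y; rewrite !inE; case: eqP => [->|]; rewrite ?Px.
  by rewrite cardsU1 !inE (negbTE xA).
have -> // : [set j in x |: A | P j] = [set j in A | P j].
by apply/setP=> y; rewrite !inE; case: eqP => [->|]; rewrite ?Px ?(negbTE xA).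
Qed.

Lemma sign_id (i v : 'I_n) (J : {set 'I_n}) : i \notin J -> v \notin J -> i != v ->
  e i (v |: J) * e v (i |: J) = - (e i J * e v J).
Proof.
move=> iJ vJ iv; rewrite /e (card_sep _ vJ) (card_sep _ iJ) /=.
rewrite -!exprD -(mulN1r ((-1) ^+ _)) -exprS -[LHS]signr_odd -[RHS]signr_odd.
congr (_ ^+ _).
have : (i : nat) <> v by move=> h; move/eqP: iv; apply; apply: val_inj.
move=> hne; case: (ltngtP v i) hne => h hne; last by case: hne.
all: rewrite /= ?add0n ?add1n !oddD /=.
all: by case: (odd #|[set j in J | (j < i)%N]|); case: (odd #|[set j in J | (j < v)%N]|).
Qed.

Definition hb (c : {ffun FIbasis n d -> R}) : {ffun FIbasis n d -> R} :=
  @finfun (FIbasis n d) (fun=> R) (fun p : FIbasis n d => if [pick x | x \notin codom p.2] is Some v then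
     (if v \in p.1 then e v (p.1 :\ v) * c (p.1 :\ v, p.2) else 0) else 0).

End S.
Arguments e {R n}.
Local Open Scope ring_scope.

Theorem proposition3p2 (R : comPzRingType) (d n a : nat) : (1 <= a)%N ->
  forall c : {ffun FIbasis n d -> R},
    is_chain a c -> bd c = 0%R ->
    exists b : {ffun FIbasis n d -> R}, is_chain a.+1 b /\ bd b = c.
Proof.
move=> a1 c hc hcyc; exists (hb c); split.
  move=> [K f] /= hv; rewrite ffunE /=.
  case: pickP => [v /= vf|] //; case vK: (v \in K) => //.
  rewrite hc ?GRing.mulr0 //; apply: contra hv; rewrite /valid_pair /=.
  case/and3P => /eqP hK -> hdis; apply/and3P; split => //.
    by rewrite (cardsD1 v) vK hK.
  apply/pred0P => x /=; move/pred0P: hdis => /(_ x) /=; rewrite !inE.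
  case: eqP => [->|] //=; first by rewrite (negbTE vf).
apply/ffunP => -[J f]; rewrite bdE /=.
under eq_bigr do rewrite ffunE /=.
case: pickP => [v /= vf|hnone].
  case vJ: (v \in J).
    set J' := J :\ v.
    have vJ' : v \notin J' by rewrite setD11.
    move/ffunP: (hcyc) => /(_ (J', f)); rewrite bdE ffunE /=.
    rewrite (bigD1 v) //= setD1K //.
    have -> : \sum_(i | (i \notin J') && (i != v)) e i J' * c (i |: J', f) =
              \sum_(i | i \notin J) e i J' * c (i |: J', f).
      apply: eq_bigl => i; rewrite !inE; case: (eqVneq i v) => [->|]; rewrite ?vJ //.
      by rewrite andbT.
    move=> hcy.
    have -> : \sum_(i | i \notin J) e i J *
       (if v \in i |: J then e v ((i |: J) :\ v) * c ((i |: J) :\ v, f) else 0)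
      = - e v J' * \sum_(i | i \notin J) e i J' * c (i |: J', f).
      rewrite big_distrr /=; apply: eq_bigr => i iJ.
      have iv : i != v by apply: contraNneq iJ => ->.
      have -> : (i |: J) :\ v = i |: J'.
        apply/setP => x; rewrite !inE; case: (eqVneq x i) => [->|] //=.
        by rewrite iv.
      rewrite setU1r // mulrA.
      have iJ' : i \notin J' by rewrite !inE negb_and iJ orbT.
      rewrite -{1}(setD1K vJ) -/J' sign_id //.
      by rewrite !mulNr (mulrC (e i J')) mulrA.
    have -> : \sum_(i | i \notin J) e i J' * c (i |: J', f) = - (e v J' * c (J, f)).
      by apply/eqP; rewrite -addr_eq0 addrC hcy.
    by rewrite mulNr mulrN opprK mulrA ee mul1r.
  rewrite (bigD1 v) ?vJ //= setU11 setU1K ?vJ // mulrA ee mul1r big1 ?addr0 //.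
  move=> i /andP [iJ iv]; rewrite !inE (eq_sym v) (negbTE iv) vJ /=.
  by rewrite mulr0.
rewrite big1; last by move=> *; rewrite mulr0.
symmetry; apply: (hc (J, f)); rewrite /valid_pair /=.
case: (set_0Vmem J) => [->|[x xJ]].
  by rewrite cards0; case: eqP => // h; rewrite -h in a1.
apply/negP => /and3P [_ _ /pred0P /(_ x)] /=.
by move: (hnone x) => /= /negbFE ->; rewrite xJ.
Qed.
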